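(* Let $G$ be a finite simple connected graph containing no cycle of length $3$ and no cycle of length $5$ as a subgraph, and let $\kappa>0$ be such that $\kappa_{LLY}(u,v)\ge\kappa$ for every edge $uv$ of $G$. Then for any vertex $x$ and any vertex $y$ with $d(x,y)=i$, where $1\le i\le \mathrm{diam}(G)\le\lfloor 2/\kappa\rfloor$, $$|\Gamma^+_x(y)|+|\Gamma^0_x(y)|\le\left(1-\frac{i\kappa}{2}\right)d_y.$$
   Context: For vertices $u,v$ of a connected graph $G$, $d(u,v)$ is the graph distance, $\mathrm{diam}(G)=\max_{u,v}d(u,v)$, $N(v)$ is the neighborhood of $v$ and $d_v=|N(v)|$. For vertices $x,y$: $\Gamma^-_x(y)=\{u\in N(y): d(x,u)=d(x,y)-1\}$, $\Gamma^0_x(y)=\{u\in N(y): d(x,u)=d(x,y)\}$, $\Gamma^+_x(y)=\{u\in N(y): d(x,u)=d(x,y)+1\}$. For $0\le\alpha<1$, the $\alpha$-lazy random walk is $m_x^\alpha(x)=\alpha$, $m_x^\alpha(v)=(1-\alpha)/d_x$ for $v\in N(x)$, $m_x^\alpha(v)=0$ otherwise. The transportation distance between probability distributions $m_1,m_2$ on $V(G)$ is $W(m_1,m_2)=\inf_A\sum_{x,y}A(x,y)d(x,y)$ over couplings $A:V\times V\to[0,1]$ with marginals $m_1,m_2$. For distinct $x,y$, $\kappa_\alpha(x,y)=1-W(m_x^\alpha,m_y^\alpha)/d(x,y)$ and $\kappa_{LLY}(x,y)=\lim_{\alpha\to1}\kappa_\alpha(x,y)/(1-\alpha)$. (It is known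 that under the curvature hypothesis, $\mathrm{diam}(G)\le 2/\kappa$.) *)

(* Defs.v *)
From HB Require Import structures.
From mathcomp Require Import all_boot all_order all_algebra.
From mathcomp Require Import all_classical all_reals all_analysis.
Set Implicit Arguments. Unset Strict Implicit. Unset Printing Implicit Defensive.
Import Order.TTheory GRing.Theory Num.Theory.
Import numFieldNormedType.Exports.
Local Open Scope ring_scope.
Local Open Scope classical_set_scope.

Section Graph.
Variables (T : finType) (e : rel T).

Definition simple_graph := symmetric e /\ irreflexive e.

Definition connected_graph := forall x y : T, connect e x y.

Definition has_cycle_subgraph (k : nat) :=
  exists f : 'I_k -> T, injective f /\ forall i : 'I_k, e (f i) (f (ordS i)).

Definition walk_of_length (n : nat) (x y : T) : bool :=
  [exists p : n.-tuple T, path e x p && (last x p == y)].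

(* graph distance: the least n with a walk (equivalently a path) of length n
   from x to y; in a connected graph this is < #|T|. *)
Definition dist (x y : T) : nat :=
  find (fun n => walk_of_length n x y) (iota 0 #|T|).

Definition diam : nat := \max_(u : T) \max_(v : T) dist u v.

Definition nbhd (v : T) : {set T} := [set u | e v u].
Definition deg (v : T) : nat := #|nbhd v|.

Definition Gamma_minus (x y : T) : {set T} :=
  [set u in nbhd y | (dist x u).+1 == dist x y].
Definition Gamma_zero (x y : T) : {set T} :=
  [set u in nbhd y | dist x u == dist x y].
Definition Gamma_plus (x y : T) : {set T} :=
  [set u in nbhd y | dist x u == (dist x y).+1].

Variable R : realType.

Definition lazy_walk (alpha : R) (x : T) (v : T) : R :=
  if v == x then alpha
  else if e x v then (1 - alpha) / (deg x)%:R else 0.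

Definition is_coupling (m1 m2 : T -> R) (A : T -> T -> R) :=
  (forall u v, 0 <= A u v <= 1) /\
  (forall u, \sum_(v : T) A u v = m1 u) /\
  (forall v, \sum_(u : T) A u v = m2 v).

Definition transport_dist (m1 m2 : T -> R) : R :=
  inf [set c : R | exists A : T -> T -> R, is_coupling m1 m2 A /\
        c = \sum_(u : T) \sum_(v : T) A u v * (dist u v)%:R].

Definition kappa_alpha (alpha : R) (x y : T) : R :=
  1 - transport_dist (lazy_walk alpha x) (lazy_walk alpha y) / (dist x y)%:R.

Definition kappa_LLY (x y : T) : R :=
  lim ((fun alpha : R => kappa_alpha alpha x y / (1 - alpha) : R)
         @ at_left (1 : R)).

End Graph.

(* Main.v *)
Require Import Defs.
From HB Require Import structures.
From mathcomp Require Import all_boot all_order all_algebra.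
From mathcomp Require Import all_classical all_reals all_analysis.
From mathcomp Require Import lra ring zify.
Import Order.TTheory GRing.Theory Num.Theory.
Import numFieldNormedType.Exports.
Local Open Scope ring_scope.

Section GraphFacts.
Variables (T : finType) (e : rel T).

Lemma walkP n a b : reflect (exists p : seq T, [/\ size p == n, path e a p & last a p == b])
  (walk_of_length e n a b).
Proof.
apply: (iffP existsP).
  by case=> p /andP[H1 H2]; exists (val p); rewrite size_tuple eqxx.
by case=> p [Hs H1 H2]; exists (Tuple Hs); rewrite /= H1 H2.
Qed.

Lemma dist_le n a b : walk_of_length e n a b -> (dist e a b <= n)%N.
Proof.
move=> W; rewrite /dist.
case: (ltnP n #|T|) => Hn; last first.
  by apply: leq_trans (find_size _ _) _; rewrite size_iota.
rewrite leqNgt; apply/negP => H.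
have := before_find 0 H; rewrite nth_iota // add0n W //.
Qed.

Hypothesis conn : connected_graph e.
Hypothesis esym : symmetric e.
Hypothesis eirr : irreflexive e.

Lemma dist_walk a b : walk_of_length e (dist e a b) a b.
Proof.
have /connectP[p Hp Hl] := conn a b.
case: (shortenP Hp) Hl => p' Hp' Hu _ Hl.
have Hsz : (size p' < #|T|)%N.
  by have := card_uniqP Hu => /= <-; apply: max_card.
have Hw : walk_of_length e (size p') a b.
  by apply/walkP; exists p'; rewrite eqxx Hp' -Hl.
have Hh : has (fun n => walk_of_length e n a b) (iota 0 #|T|).
  by apply/hasP; exists (size p'); rewrite // mem_iota add0n Hsz.
have Hf : (find (fun n => walk_of_length e n a b) (iota 0 #|T|) < #|T|)%N.
  by rewrite -{2}(size_iota 0 #|T|) -has_find.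
have := nth_find 0 Hh; rewrite nth_iota // add0n; exact.
Qed.

Lemma dist_lt a b : (dist e a b < #|T|)%N.
Proof.
have /connectP[p Hp Hl] := conn a b.
case: (shortenP Hp) Hl => p' Hp' Hu _ Hl.
have Hsz : (size p' < #|T|)%N.
  by have := card_uniqP Hu => /= <-; apply: max_card.
apply: leq_ltn_trans Hsz; apply: dist_le.
by apply/walkP; exists p'; rewrite eqxx Hp' -Hl.
Qed.

Lemma dist0 {a b} : dist e a b = 0%N -> a = b.
Proof.
move=> H; have := dist_walk a b; rewrite H => /walkP[p [Hs _ Hl]].
by move: Hs Hl; case: p => // _ /= /eqP.
Qed.

Lemma dist1 {a b} : dist e a b = 1%N -> e a b.
Proof.
move=> H; have := dist_walk a b; rewrite H => /walkP[p [Hs Hp Hl]].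
by move: Hs Hp Hl; case: p => [|c [|]] //= _; rewrite andbT => H1 /eqP <-.
Qed.

Lemma dist2 {a b} : dist e a b = 2%N -> exists c, e a c /\ e c b.
Proof.
move=> H; have := dist_walk a b; rewrite H => /walkP[p [Hs Hp Hl]].
move: Hs Hp Hl; case: p => [|c [|d []]] //= _; rewrite andbT => /andP[H1 H2] /eqP Hd.
by exists c; rewrite -Hd.
Qed.

Lemma dist_self a : dist e a a = 0%N.
Proof. by apply/eqP; rewrite -leqn0; apply: dist_le; apply/walkP; exists [::]. Qed.

Lemma dist_edge_le x {a b} : e a b -> (dist e x b <= (dist e x a).+1)%N.
Proof.
move=> Hab; apply: dist_le; have /walkP[p [Hs Hp Hl]] := dist_walk x a.
apply/walkP; exists (rcons p b); rewrite size_rcons (eqP Hs) eqxx.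
by rewrite rcons_path Hp (eqP Hl) Hab last_rcons.
Qed.

Lemma dist_pred x y n : dist e x y = n.+1 -> exists z, e y z /\ dist e x z = n.
Proof.
move=> H; have := dist_walk x y; rewrite H => /walkP[p [Hs Hp Hl]].
move: Hs Hp Hl; case/lastP: p => // p c; rewrite size_rcons eqSS rcons_path last_rcons.
move=> Hs /andP[Hp He] /eqP Hc; subst c.
exists (last x p); split.
  by rewrite esym.
apply/eqP; rewrite eqn_leq; apply/andP; split.
  by apply: dist_le; apply/walkP; exists p; rewrite Hs Hp.
rewrite -ltnS -H; exact: dist_edge_le He.
Qed.


Lemma cyc k (s : seq T) a0 : size s = k -> uniq s ->
  (forall i : 'I_k, e (nth a0 s i) (nth a0 s (ordS i))) -> has_cycle_subgraph e k.
Proof.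
move=> Hs Hu He; exists (fun i => nth a0 s i); split => // i j /eqP.
by rewrite nth_uniq ?Hs // => /eqP /val_inj.
Qed.

Lemma neq_edge {a b} : e a b -> a != b.
Proof. by apply: contraTneq => ->; rewrite eirr. Qed.

Lemma no3 {a b c} : ~ has_cycle_subgraph e 3 -> e a b -> e b c -> e c a -> False.
Proof.
move=> H Hab Hbc Hca; apply: H; apply: (@cyc 3 [:: a; b; c] a) => //.
  rewrite /= !inE negb_or (neq_edge Hab) (neq_edge Hbc) andbT /=.
  by rewrite eq_sym (neq_edge Hca).
by case=> [[|[|[|//]]] Hi].
Qed.

Lemma no5 {a b c d f} : ~ has_cycle_subgraph e 5 -> uniq [:: a; b; c; d; f] ->
  e a b -> e b c -> e c d -> e d f -> e f a -> False.
Proof.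
move=> H Hu Hab Hbc Hcd Hdf Hfa; apply: H; apply: (@cyc 5 [:: a; b; c; d; f] a) => //.
by case=> [[|[|[|[|[|//]]]]] Hi].
Qed.

Lemma dist_ge1 {a b} : a != b -> (1 <= dist e a b)%N.
Proof. by move=> H; rewrite lt0n; apply: contra H => /eqP /dist0 ->. Qed.

Lemma dist_ge2 a b : a != b -> ~~ e a b -> (2 <= dist e a b)%N.
Proof.
move=> H1 H2; case H: (dist e a b) => [|[|n]] //.
  by move: H1; rewrite (dist0 H) eqxx.
by move: H2; rewrite (dist1 H).
Qed.

Lemma dist_ge3 a b : a != b -> ~~ e a b -> (forall c, e a c -> e c b -> False) ->
  (3 <= dist e a b)%N.
Proof.
move=> H1 H2 H3; case H: (dist e a b) => [|[|[|n]]] //.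
- by move: H1; rewrite (dist0 H) eqxx.
- by move: H2; rewrite (dist1 H).
- by case: (dist2 H) => c [Hc1 Hc2]; case: (H3 c).
Qed.

Definition fL (x v w : T) (u : T) : nat :=
  if u == v then 1 else if u == w then 2
  else if e v u then (if u \in Gamma_minus e x v then 0 else 2)
  else (if u \in Gamma_minus e x w then 1 else 3).

Lemma fL_le3 x v w u : (fL x v w u <= 3)%N.
Proof. by rewrite /fL; do ! case: ifP. Qed.

Lemma lip x v w a b : ~ has_cycle_subgraph e 3 -> ~ has_cycle_subgraph e 5 ->
  e v w -> dist e x w = (dist e x v).+1 ->
  (a == v) || e v a -> (b == w) || e w b ->
  (fL x v w b <= fL x v w a + dist e a b)%N.
Proof.
move=> N3 N5 Hvw Hd Ha Hb.
have nvw := neq_edge Hvw.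
have Hwv : e w v by rewrite esym.
have fv : fL x v w v = 1%N by rewrite /fL eqxx.
have fw : fL x v w w = 2%N by rewrite /fL eqxx eq_sym (negbTE nvw).
case/orP: Ha => [/eqP-> | Hva]; case/orP: Hb => [/eqP-> | Hwb].
- by rewrite fv fw add1n ltnS dist_ge1.
- have [->|nbv] := eqVneq b v; first by rewrite leq_addr.
  have nvb : ~~ e v b by apply/negP => Hvb; apply: (no3 N3 Hvw Hwb); rewrite esym.
  rewrite fv; apply: leq_trans (fL_le3 _ _ _ _) _.
  by rewrite add1n ltnS dist_ge2 // eq_sym.
- have [->|naw] := eqVneq a w; first by rewrite leq_addr.
  have naw' : ~~ e a w by apply/negP => Haw; apply: (no3 N3 Hva Haw Hwv).
  rewrite fw; apply: leq_trans (_ : 2 <= dist e a w)%N _; first by rewrite dist_ge2.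
  exact: leq_addl.
- have nav : a != v by rewrite eq_sym neq_edge.
  have [->|nbv] := eqVneq b v.
    by rewrite fv; apply: leq_trans (dist_ge1 nav) (leq_addl _ _).
  have [->|naw] := eqVneq a w.
    rewrite fw; apply: leq_trans (fL_le3 _ _ _ _) _.
    by rewrite -[X in (X < _)%N]addn0 ltn_add2l (dist_ge1 (neq_edge Hwb)).
  have nvb : ~~ e v b by apply/negP => Hvb; apply: (no3 N3 Hvw Hwb); rewrite esym.
  have nbw : b != w by rewrite eq_sym neq_edge.
  have nab : a != b by apply: contraNneq nvb => <-.
  have nwa : ~~ e w a by apply/negP => Hwa; apply: (no3 N3 Hvw Hwa); rewrite esym.
  have fa : fL x v w a = (if a \in Gamma_minus e x v then 0 else 2)%N.
    by rewrite /fL (negbTE nav) (negbTE naw) Hva.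
  have fb : fL x v w b = (if b \in Gamma_minus e x w then 1 else 3)%N.
    by rewrite /fL (negbTE nbv) (negbTE nbw) (negbTE nvb).
  rewrite fa fb.
  have d1 := dist_ge1 nab.
  case Ga: (a \in Gamma_minus e x v); last first.
    have h : (3 <= 2 + dist e a b)%N by rewrite -[3%N]/(2 + 1)%N leq_add2l.
    by case: ifP => _; [apply: leq_trans h | exact h].
  case Gb: (b \in Gamma_minus e x w); first by rewrite add0n; exact: d1.
  rewrite add0n; apply: dist_ge3; [exact: nab | | ].
    apply/negP => Hab.
    move: Ga Gb; rewrite !inE Hva Hwb !andTb => /eqP Ga /negP; apply.
    have h1 := dist_edge_le x Hab.
    have h2 : e b w by rewrite esym.
    have h3 := dist_edge_le x h2.
    rewrite Hd -Ga in h3 *; rewrite eqSS eqn_leq h1 andTb.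
    by rewrite ltnS in h3; exact: h3.
  move=> c Hac Hcb.
  have Hav : e a v by rewrite esym.
  have Hbc : e b c by rewrite esym.
  have Hca : e c a by rewrite esym.
  apply: (no5 N5 _ Hav Hvw Hwb Hbc Hca).
  rewrite /= !inE !negb_or nav naw nab (neq_edge Hac) /=.
  have ncv : c != v by apply: contraNneq nvb => <-.
  have ncw : c != w by apply: contraNneq nwa => <-; rewrite esym.
  rewrite nvw (eq_sym v b) nbv (eq_sym v c) ncv (eq_sym w b) nbw (eq_sym w c) ncw.
  by rewrite (neq_edge Hbc).
Qed.

End GraphFacts.

Local Open Scope classical_set_scope.

Lemma lim_dflt (R : realType) (f : R -> R) (F : set_system R) : ~ cvg (f @ F) -> lim (f @ F) = 0.
Proof.
move=> H. rewrite /lim /lim_in. case: xgetP => //.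
move=> l E Hl. exfalso; apply: H. rewrite /lim /lim_in -E. exact Hl.
Qed.

Section An.
Variables (R : realType) (T : finType) (e : rel T).
Hypothesis eirr : irreflexive e.

Lemma lazy_sum (a : R) w (g : T -> R) :
  \sum_u lazy_walk e a w u * g u = a * g w + (1 - a) / (deg e w)%:R * \sum_(u in nbhd e w) g u.
Proof.
rewrite (bigD1 w) //= /lazy_walk eqxx; congr (_ + _).
rewrite mulr_sumr [RHS]big_mkcond [LHS]big_mkcond; apply: eq_bigr => u _.
rewrite !inE; have [->|nuw] := eqVneq u w; first by rewrite eirr.
by case: (e w u); rewrite ?mul0r.
Qed.

Lemma sum_ind (A B : {set T}) : B \subset A ->
  \sum_(u in A) ((u \in B)%:R : R) = #|B|%:R.
Proof.
move=> sBA; rewrite big_mkcond /= (bigID (mem B)) /= -[RHS]addr0; congr (_ + _).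
  rewrite -sumr_const big_mkcond [RHS]big_mkcond; apply: eq_bigr => u _.
  by case: ifP => // uB; rewrite (fintype.subsetP sBA u uB) uB.
by apply: big1 => u /negbTE ->; case: ifP.
Qed.


Hypothesis esym : symmetric e.
Hypothesis N3 : ~ has_cycle_subgraph e 3.
Variables (x v w : T).
Hypothesis Hvw : e v w.
Hypothesis Hd : dist e x w = (dist e x v).+1.

Local Notation F := (fun u => ((fL T e x v w u)%:R : R)).

Lemma Gm_sub y : Gamma_minus e x y \subset nbhd e y.
Proof. by apply/fintype.subsetP => u; rewrite inE => /andP[]. Qed.

Lemma fw_sum : \sum_(u in nbhd e w) F u = 3 * (deg e w)%:R - 2 * #|Gamma_minus e x w|%:R.
Proof.
have vG : v \in Gamma_minus e x w by rewrite !inE esym Hvw Hd eqxx.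
transitivity (\sum_(u in nbhd e w) (3 - 2 * ((u \in Gamma_minus e x w)%:R : R))).
  apply: eq_bigr => u; rewrite inE => Hwu.
  rewrite /fL; have [->|nuv] := eqVneq u v; first by rewrite vG /=; lra.
  have nuw : u != w by rewrite eq_sym (@neq_edge _ _ eirr _ _ Hwu).
  have nvu : e v u = false.
    by apply/negP => Hvu; apply: (@no3 _ _ eirr _ _ _ N3 Hvw Hwu); rewrite esym.
  rewrite (negbTE nuw) nvu; case: (u \in Gamma_minus e x w) => /=; lra.
rewrite sumrB -mulr_sumr sum_ind ?Gm_sub // sumr_const /deg.
by rewrite [in RHS]mulr_natr.
Qed.

Lemma fv_sum : \sum_(u in nbhd e v) F u = 2 * (deg e v)%:R - 2 * #|Gamma_minus e x v|%:R.
Proof.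
have wG : (w \in Gamma_minus e x v) = false.
  rewrite !inE Hvw andTb Hd; apply: gtn_eqF; exact: leqW (ltnSn _).
transitivity (\sum_(u in nbhd e v) (2 - 2 * ((u \in Gamma_minus e x v)%:R : R))).
  apply: eq_bigr => u; rewrite inE => Hvu.
  have nuv : u != v by rewrite eq_sym (@neq_edge _ _ eirr _ _ Hvu).
  rewrite /fL (negbTE nuv); have [->|nuw] := eqVneq u w; first by rewrite wG /=; lra.
  rewrite Hvu; case: (u \in Gamma_minus e x v) => /=; lra.
rewrite sumrB -mulr_sumr sum_ind ?Gm_sub // sumr_const /deg.
by rewrite [in RHS]mulr_natr.
Qed.

Definition Gf y : R := 2 * #|Gamma_minus e x y|%:R / (deg e y)%:R.

Lemma deg_gt0 a b : e a b -> (deg e a)%:R != 0 :> R.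
Proof.
move=> Hab; rewrite pnatr_eq0 -lt0n; apply/card_gt0P; exists b; by rewrite inE.
Qed.

Lemma Ediff (a : R) : \sum_u lazy_walk e a w u * F u - \sum_u lazy_walk e a v u * F u
  = 1 - (1 - a) * (Gf w - Gf v).
Proof.
rewrite !lazy_sum fw_sum fv_sum /Gf.
have -> : fL T e x v w w = 2%N by rewrite /fL eqxx eq_sym (negbTE (@neq_edge _ _ eirr _ _ Hvw)).
have -> : fL T e x v w v = 1%N by rewrite /fL eqxx.
have Hwv : e w v by rewrite esym.
have hw := @deg_gt0 w v Hwv.
have hv := @deg_gt0 v w Hvw.
by field; rewrite hv hw.
Qed.

Hypothesis conn : connected_graph e.
Hypothesis N5 : ~ has_cycle_subgraph e 5.

Lemma coup_lb a A : is_coupling (lazy_walk e a v) (lazy_walk e a w) A ->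
  \sum_u lazy_walk e a w u * F u - \sum_u lazy_walk e a v u * F u
  <= \sum_u \sum_z A u z * (dist e u z)%:R.
Proof.
case=> [H01 [Hrow Hcol]].
have E1 : \sum_u lazy_walk e a v u * F u = \sum_u \sum_z A u z * F u.
  by apply: eq_bigr => u _; rewrite -Hrow mulr_suml.
have E2 : \sum_z lazy_walk e a w z * F z = \sum_u \sum_z A u z * F z.
  by rewrite exchange_big; apply: eq_bigr => z _; rewrite -Hcol mulr_suml.
rewrite E1 E2 -sumrB; apply: ler_sum => u _; rewrite -sumrB; apply: ler_sum => z _.
rewrite -mulrBr.
have A0 : 0 <= A u z by case/andP: (H01 u z).
case: (boolP ((u == v) || e v u)) => Hu; last first.
  have -> : A u z = 0.
    have Hm : lazy_walk e a v u = 0.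
      by rewrite /lazy_walk; move: Hu; rewrite negb_or => /andP[/negbTE-> /negbTE->].
    apply: (@psumr_eq0P R T predT (A u) _ _ z isT).
      by move=> i _; case/andP: (H01 u i).
    by rewrite Hrow.
  by rewrite !mul0r.
case: (boolP ((z == w) || e w z)) => Hz; last first.
  have -> : A u z = 0.
    have Hm : lazy_walk e a w z = 0.
      by rewrite /lazy_walk; move: Hz; rewrite negb_or => /andP[/negbTE-> /negbTE->].
    apply: (@psumr_eq0P R T predT (fun i => A i z) _ _ u isT).
      by move=> i _; case/andP: (H01 i z).
    by rewrite Hcol.
  by rewrite !mul0r.
apply: (ler_wpM2l A0); rewrite lerBlDl -natrD ler_nat.
exact: (@lip T e conn esym eirr x v w u z N3 N5 Hvw Hd Hu Hz).
Qed.

Lemma lazy_ge0 (a : R) y u : 0 <= a <= 1 -> 0 <= lazy_walk e a y u <= 1.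
Proof.
move=> /andP[a0 a1]; rewrite /lazy_walk; case: ifP => _; first by rewrite a0 a1.
case: ifP => H; last by rewrite lexx ler01.
have d1 : 1 <= (deg e y)%:R :> R.
  by rewrite ler1n lt0n -(pnatr_eq0 R); exact: (@deg_gt0 y u H).
have d0 : 0 < (deg e y)%:R :> R by apply: lt_le_trans d1; exact: ltr01.
apply/andP; split; first by apply: divr_ge0; [rewrite subr_ge0 | exact: ler0n].
rewrite ler_pdivrMr // mul1r; lra.
Qed.

Lemma lazy_sum1 (a : R) y b : e y b -> \sum_u lazy_walk e a y u = 1.
Proof.
move=> Hyb; have := lazy_sum a y (fun _ => 1).
under eq_bigr do rewrite mulr1.
move->; rewrite sumr_const /deg -[_ *+ _]mulr_natl mulr1.
have h := @deg_gt0 y b Hyb; rewrite /deg in h.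
by field.
Qed.

Lemma W_lb (a : R) : 0 <= a <= 1 ->
  1 - (1 - a) * (Gf w - Gf v) <= transport_dist e (lazy_walk e a v) (lazy_walk e a w).
Proof.
move=> ha; have Hwv : e w v by rewrite esym.
apply: lb_le_inf.
  exists (\sum_u \sum_z (lazy_walk e a v u * lazy_walk e a w z) * (dist e u z)%:R).
  exists (fun u z => lazy_walk e a v u * lazy_walk e a w z); split => //.
  split.
    move=> u z; have /andP[h1 h2] := lazy_ge0 a v u ha; have /andP[h3 h4] := lazy_ge0 a w z ha.
    by rewrite mulr_ge0 // mulr_ile1.
  split.
    by move=> u; rewrite -mulr_sumr (lazy_sum1 a w v Hwv) mulr1.
  by move=> z; rewrite -mulr_suml (lazy_sum1 a v w Hvw) mul1r.
move=> c [A [HA ->]]; rewrite -Ediff; exact: coup_lb.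
Qed.

Lemma dvw : dist e v w = 1%N.
Proof.
apply/eqP; rewrite eqn_leq; apply/andP; split.
  by apply: dist_le; apply/walkP; exists [:: w]; rewrite /= Hvw eqxx.
exact: (@dist_ge1 T e conn v w (@neq_edge _ _ eirr _ _ Hvw)).
Qed.

Lemma ka_le (a : R) : 0 <= a -> a < 1 -> kappa_alpha e a v w / (1 - a) <= Gf w - Gf v.
Proof.
move=> a0 a1; have h1a : 0 < 1 - a by rewrite subr_gt0.
rewrite /kappa_alpha dvw divr1 ler_pdivrMr //.
have := W_lb a; rewrite a0 (ltW a1) => /(_ isT).
set W := transport_dist _ _ _; set B := Gf w - Gf v.
move=> h; rewrite mulrC; lra.
Qed.

Lemma lly_le : kappa_LLY e R v w <= Gf w - Gf v \/ kappa_LLY e R v w = 0.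
Proof.
rewrite /kappa_LLY.
case: (pselect (cvg ((fun a : R => kappa_alpha e a v w / (1 - a)) @ at_left (1:R)))) => H;
  last by right; exact: lim_dflt.
left; apply: limr_le => //.
near=> a; apply: ka_le.
  near: a; exact: nbhs_left_ge ltr01.
near: a; exact: nbhs_left_lt.
Unshelve. all: by end_near.
Qed.

End An.

Local Close Scope classical_set_scope.

Lemma Gsub_nb (T : finType) (e : rel T) (y : T) (P : pred T) :
  [set u in nbhd e y | P u] \subset nbhd e y.
Proof. by apply/fintype.subsetP => u; rewrite inE => /andP[]. Qed.

Theorem lemma2p1 (R : realType) (T : finType) (e : rel T) (kappa : R) :
  simple_graph e -> connected_graph e ->
  ~ has_cycle_subgraph e 3 -> ~ has_cycle_subgraph e 5 ->
  0 < kappa ->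
  (forall u v : T, e u v -> kappa <= kappa_LLY e R u v) ->
  forall x y : T,
    (1 <= dist e x y)%N -> (dist e x y <= diam e)%N ->
    ((diam e)%:Z <= Num.floor (2 / kappa))%R ->
    (#|Gamma_plus e x y| + #|Gamma_zero e x y|)%:R
      <= (1 - (dist e x y)%:R * kappa / 2) * (deg e y)%:R.
Proof.
move=> [esym eirr] conn N3 N5 kpos Hk x y Hi _ _.
have edge v w : e v w -> dist e x w = (dist e x v).+1 -> kappa <= Gf R T e x w - Gf R T e x v.
  move=> Hvw Hd.
  case: (@lly_le R T e eirr esym N3 x v w Hvw Hd conn N5) => h.
    exact: le_trans (Hk v w Hvw) h.
  by have := Hk v w Hvw; rewrite h => h0; exfalso; move: (lt_le_trans kpos h0); rewrite ltxx.
have ind n : forall z, dist e x z = n -> n%:R * kappa <= Gf R T e x z.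
  elim: n => [|n IH] z Hz.
    rewrite mul0r /Gf; apply: divr_ge0; [apply: mulr_ge0 | ]; exact: ler0n.
  have [z' [Hzz' Hz']] := @dist_pred T e conn esym x z n Hz.
  have Hz'z : e z' z by rewrite esym.
  have Hd : dist e x z = (dist e x z').+1 by rewrite Hz Hz'.
  have := edge z' z Hz'z Hd.
  have := IH z' Hz'.
  rewrite -addn1 natrD mulrDl mul1r; lra.
have hG := ind _ y erefl.
set i := dist e x y in Hi hG *.
set d := deg e y in hG *.
set gm := #|Gamma_minus e x y| in hG.
have hi : 0 < i%:R * kappa :> R by apply: mulr_gt0; [rewrite ltr0n | ].
have dpos : 0 < d%:R :> R.
  rewrite ltr0n lt0n; apply/negP => /eqP d0.
  by move: hG; rewrite /Gf -/d d0 invr0 mulr0 => h; move: (lt_le_trans hi h); rewrite ltxx.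
have hG' : i%:R * kappa * d%:R <= 2 * gm%:R.
  by rewrite -ler_pdivlMr.
have cardB : #|Gamma_plus e x y|%:R + #|Gamma_zero e x y|%:R + gm%:R <= d%:R :> R.
  have hs (B : {set T}) : B \subset nbhd e y ->
    #|B|%:R = \sum_(u in nbhd e y) ((u \in B)%:R : R).
    by move=> sB; rewrite (sum_ind R T _ _ sB).
  rewrite /gm (hs (Gamma_plus e x y)) ?Gsub_nb // (hs (Gamma_zero e x y)) ?Gsub_nb //.
  rewrite (hs (Gamma_minus e x y)) ?Gsub_nb //.
  rewrite -!big_split /= /d /deg -sumr_const.
  apply: ler_sum => u; rewrite inE => Hyu.
  rewrite !inE Hyu !andTb.
  set k := dist e x u.
  case E1: (k == i.+1); case E2: (k == i); case E3: (k.+1 == i) => /=;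
    move/eqP: E1; move/eqP: E2; move/eqP: E3; try lra; lia.
rewrite natrD; move: hG' cardB; set t := i%:R * kappa.
have -> : (1 - t / 2) * d%:R = d%:R - (t * d%:R) / 2 by rewrite mulrBl mul1r mulrAC.
move: (t * d%:R) => td; lra.
Qed.
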